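(* Consider the noisy graph search with Bayesian weight updates described in the context, started from uniform weights $\omega_0(v)=\frac1n$, and let $v^*$ be the target. Then for every $\tau\ge1$ and every $0<\delta<\frac12$, with probability at least $1-\delta$, $$\omega_\tau(v^* )\ge\frac{1}{n}\,\Gamma^{-\sqrt{\frac{\tau}{2}\ln\delta^{-1}}}\,2^{-H(p)\tau},$$ where $\Gamma=\frac{1-p}{p}$.
   Context: $G=(V,E)$ is a connected undirected unweighted graph with $n$ vertices and unknown target $v^*$; $0<p<\frac12$. In each step a vertex $q$ is queried (chosen adaptively); the correct answer is ''yes'' if $q=v^*$ and otherwise a neighbor of $q$ on a shortest path from $q$ to $v^*$; each answer is independently erroneous (arbitrary other answer) with probability $p$. Weights $\omega_t$ are updated after each answer: a vertex $v$ is compatible with a yes-answer iff $v=q$, and with a no-answer $u$ iff either $u$ lies on a shortest $q$–$v$ path, or $q$ is heavy (i.e., $\omega_{t-1}(q)\ge\frac12\sum_{w}\omega_{t-1}(w)$) and $v\ne q$; compatible vertices are multiplied by $1-p$ and the others by $p$. $H(p)=-p\log_2p-(1-p)\log_2(1-p)$. *)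

(* Defs.v *)
From HB Require Import structures.
From mathcomp Require Import all_boot all_order all_algebra.
From mathcomp Require Import boolp reals exp.
Set Implicit Arguments. Unset Strict Implicit. Unset Printing Implicit Defensive.
Import Order.TTheory GRing.Theory Num.Theory.
Local Open Scope ring_scope.

(* A graph is a symmetric irreflexive relation [e] on a finite vertex type [T].
   An answer to a query is an [option T]: [None] = "yes", [Some u] = "u". *)

Definition on_shortest (T : finType) (e : rel T) (q v u : T) : Prop :=
  exists s : seq T,
    [/\ path e q s, last q s = v, u \in q :: s &
        forall s' : seq T, path e q s' -> last q s' = v -> (size s <= size s')%N].

Definition correct_answer (T : finType) (e : rel T) (vs q : T) (a : option T) : Prop :=
  if q == vs then a = None
  else exists u, a = Some u /\ e q u /\ on_shortest e q vs u.

Definition valid_answer (T : finType) (e : rel T) (q : T) (a : option T) : Prop :=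
  a = None \/ exists u, a = Some u /\ e q u.

Definition heavy (R : realType) (T : finType) (w : T -> R) (q : T) : bool :=
  w q >= 2^-1 * \sum_(x : T) w x.

Definition compatible (R : realType) (T : finType) (e : rel T)
    (w : T -> R) (q : T) (a : option T) (v : T) : bool :=
  match a with
  | None => v == q
  | Some u => `[< on_shortest e q v u >] || (heavy w q && (v != q))
  end.

Definition update (R : realType) (T : finType) (e : rel T) (p : R)
    (w : T -> R) (q : T) (a : option T) : T -> R :=
  fun v => w v * (if compatible e w q a v then 1 - p else p).

Definition state (R : realType) (T : finType) :=
  (seq (T * option T) * seq bool * (T -> R))%type.

(* One step of the process driven by error bit [b]:
   the (deterministic, adaptive) strategy [strat] picks the query from the
   query/answer history; the oracle [oracle] produces the answer from the past
   error bits, the query and the current error bit [b] (b = true: erroneous). *)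
Definition step (R : realType) (T : finType) (e : rel T) (p : R)
    (strat : seq (T * option T) -> T)
    (oracle : seq bool -> T -> bool -> option T)
    (st : state R T) (b : bool) : state R T :=
  let: (hist, bs, w) := st in
  let q := strat hist in
  let a := oracle bs q b in
  (rcons hist (q, a), rcons bs b, update e p w q a).

Definition weights_after (R : realType) (T : finType) (e : rel T) (p : R)
    (strat : seq (T * option T) -> T)
    (oracle : seq bool -> T -> bool -> option T) (bs : seq bool) : T -> R :=
  (foldl (step e p strat oracle) ([::], [::], fun _ => (#|T|%:R)^-1) bs).2.

Definition bits_prob (R : realType) (p : R) (bs : seq bool) : R :=
  \prod_(b <- bs) (if b then p else 1 - p).

Definition log2 (R : realType) (x : R) : R := ln x / ln 2.
Definition Hbin (R : realType) (p : R) : R :=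
  - p * log2 p - (1 - p) * log2 (1 - p).

(* Main.v *)
Require Import Defs.
From HB Require Import structures.
From mathcomp Require Import all_boot all_order all_algebra.
From mathcomp Require Import boolp reals exp.
From mathcomp Require Import ring lra.
From mathcomp Require Import classical_sets topology normedtype sequences derive realfun.
Import Order.TTheory GRing.Theory Num.Theory numFieldNormedType.Exports.
Local Open Scope ring_scope.

Section H.
Variable R : realType.

Lemma mvt_le (f df : R -> R) (a b : R) : a <= b ->
  (forall x : R, is_derive x (1:R) f (df x)) ->
  (forall x, a <= x -> x <= b -> 0 <= df x) -> f a <= f b.
Proof.
move=> ab fd dfp.
have [|c cab E] := @MVT_segment R f df a b ab (fun x _ => fd x).
  apply/continuous_subspaceT => r.
  by apply/differentiable_continuous/derivable1_diffP; case: (fd r).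
rewrite -subr_ge0 E mulr_ge0 ?subr_ge0 //.
by apply: dfp; move: cab; rewrite in_itv /= => /andP[].
Qed.

Variable p : R.
Hypothesis p0 : 0 < p.
Hypothesis p1 : p < 1.


Definition N (x : R) := 1 - p + p * expR x.
Lemma N_gt0 x : 0 < N x.
Proof. by rewrite /N addr_gt0 ?subr_gt0 // mulr_gt0 // expR_gt0. Qed.


Lemma dN (x : R) : is_derive x (1:R) N (p * expR x).
Proof. by apply: is_derive_eq; rewrite add0r mul1r. Qed.

Definition g2 (x : R) := 4^-1 - p * (1 - p) * expR x / (N x ^+ 2).
Definition g1 (x : R) := p + x / 4 - p * expR x / N x.
Definition g (x : R) := x * p + x ^+ 2 / 8 - ln (N x).


Lemma dg1 (x : R) : is_derive x (1:R) g1 (g2 x).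
Proof.
have A : is_derive x (1:R) (fun y => p + y / 4) (4^-1).
  by apply: is_derive_eq; rewrite add0r mul1r scaler0 add0r [_%:A]mulr1.
have V : is_derive x (1:R) (fun y => (N y)^-1) (- (N x)^-2 *: (p * expR x)).
  by apply: is_deriveV; [rewrite gt_eqF // N_gt0 | exact: dN].
have E : is_derive x (1:R) (fun y => p * expR y) (p * expR x).
  by apply: is_derive_eq.
have B := is_deriveM E V.
have C := is_deriveB A B.
rewrite /g1; apply: is_derive_eq C _.
have n0 : N x != 0 by rewrite gt_eqF // N_gt0.
rewrite /g2 (_ : 1 - p = N x - p * expR x); last by rewrite /N; ring.
rewrite -![_ *: _]/(_ * _).
by field.
Qed.

Lemma dg (x : R) : is_derive x (1:R) g (g1 x).
Proof.
have A : is_derive x (1:R) (fun y => y * p + y ^+ 2 / 8) (p + x / 4).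
  by apply: is_derive_eq; rewrite !scaler0 !add0r -![_ *: _]/(_ * _); field.
have L : is_derive x (1:R) (@ln R \o N) ((N x)^-1 * (p * expR x)).
  exact: is_derive1_comp (is_derive1_ln (N_gt0 x)) (dN x).
have C := is_deriveB A L.
rewrite /g; apply: is_derive_eq C _.
have n0 : N x != 0 by rewrite gt_eqF // N_gt0.
by rewrite /g1 [_^-1 * _]mulrC.
Qed.

Lemma g2_ge0 x : 0 <= g2 x.
Proof.
have Np := N_gt0 x.
rewrite /g2 subr_ge0 ler_pdivrMr ?exprn_gt0 //.
have -> : p * (1 - p) * expR x = (1 - p) * (p * expR x) by ring.
rewrite /N; set a := 1 - p; set b := p * expR x.
have := sqr_ge0 (a - b); nra.
Qed.

Lemma g1_ge0 x : 0 <= x -> 0 <= g1 x.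
Proof.
move=> x0.
have -> : 0 = g1 0 by rewrite /g1 /N expR0 !mulr1 subrK divr1 mul0r addr0 subrr.
apply: (@mvt_le g1 g2 0 x x0 dg1) => y _ _; exact: g2_ge0.
Qed.

Lemma g_ge0 x : 0 <= x -> 0 <= g x.
Proof.
move=> x0.
have -> : 0 = g 0.
  by rewrite /g /N expR0 mulr1 subrK ln1 mul0r expr0n /= mul0r addr0 subrr.
have := @mvt_le g g1 0 x x0 dg; apply => y y0 _; exact: g1_ge0.
Qed.

Lemma hoeffding l : 0 <= l -> N l <= expR (l * p + l ^+ 2 / 8).
Proof.
move=> l0; have := @g_ge0 l l0; rewrite /g subr_ge0 => H.
by rewrite -(lnK (N_gt0 l)) ler_expR.
Qed.
End H.

Lemma sum_tuple_prod (R : comNzRingType) n (F : bool -> R) :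
  \sum_(t : n.-tuple bool) \prod_(x <- t) F x = (F true + F false) ^+ n.
Proof.
elim: n => [|n IH].
  rewrite (eq_bigr (fun _ => 1)); last by move=> t _; rewrite tuple0 big_nil.
  by rewrite sumr_const card_tuple expr0.
rewrite (reindex (fun bt : bool * n.-tuple bool => [tuple of bt.1 :: bt.2])) /=; last first.
  exists (fun t => (thead t, [tuple of behead t])).
    by move=> [b t] _ /=; rewrite theadE; congr pair; apply: val_inj.
  by move=> t _; rewrite -tuple_eta.
rewrite -(pair_big xpredT xpredT (fun b (t : n.-tuple bool) => \prod_(x <- b :: t) F x)) /=.
under eq_bigr => b _ do under eq_bigr => t _ do rewrite big_cons.
under eq_bigr => b _ do rewrite -big_distrr /= IH.
by rewrite big_bool /= -mulrDl exprS.
Qed.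

Lemma prod_count (R : comNzRingType) (a b : R) (s : seq bool) :
  \prod_(x <- s) (if x then a else b) = a ^+ count id s * b ^+ count negb s.
Proof.
elim: s => [|x s IH]; first by rewrite big_nil !expr0 mulr1.
rewrite big_cons IH; case: x => /=; rewrite ?add0n ?add1n exprS; ring.
Qed.

Section W.
Variables (R : realType) (T : finType) (e : rel T) (p : R) (vs : T).
Hypotheses (hp0 : 0 < p) (hp1 : p < 2^-1).
Variables (strat : seq (T * option T) -> T)
  (oracle : seq bool -> T -> bool -> option T).
Hypothesis oracle_correct : forall bs q, correct_answer e vs q (oracle bs q false).

Lemma bits_prob_ge0 bs : 0 <= bits_prob p bs.
Proof.
rewrite /bits_prob; apply: prodr_ge0 => -[] _; first exact: ltW.
by rewrite subr_ge0 ltW // (lt_trans hp1) // invf_lt1 // ltr1n.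
Qed.

Lemma compat_correct bs (w : T -> R) q : compatible e w q (oracle bs q false) vs.
Proof.
have := oracle_correct bs q; rewrite /correct_answer /compatible.
case: eqP => [-> -> | _ [u [-> [_ H]]]]; first exact: eqxx.
by apply/orP; left; apply/asboolP.
Qed.

Lemma weights_ge (st : state R T) bs : 0 <= st.2 vs ->
  st.2 vs * bits_prob p bs <= (foldl (step e p strat oracle) st bs).2 vs.
Proof.
have p1 : p <= 1 - p.
  have hp2 : p * 2 < 1 by rewrite -ltr_pdivlMr ?div1r.
  lra.
have p0 := ltW hp0.
elim: bs st => [|b bs IH] [[h b0] w] /= w0.
  by rewrite /bits_prob big_nil mulr1.
have u0 : 0 <= update e p w (strat h) (oracle b0 (strat h) b) vs.
  rewrite /update mulr_ge0 //; case: ifP => // _; exact: le_trans p1.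
apply: le_trans (IH (rcons h (strat h, oracle b0 (strat h) b), rcons b0 b, update e p w (strat h) (oracle b0 (strat h) b)) u0).
rewrite /bits_prob big_cons mulrA ler_wpM2r //; first exact: bits_prob_ge0.
rewrite /update ler_wpM2l //; clear u0 IH; case: b; last by rewrite compat_correct.
by case: ifP.
Qed.
End W.

Theorem lemma6 (R : realType) (T : finType) (e : rel T)
    (e_sym : symmetric e) (e_irr : irreflexive e)
    (e_conn : forall x y : T, connect e x y)
    (p : R) (hp0 : 0 < p) (hp1 : p < 2^-1)
    (vs : T)
    (strat : seq (T * option T) -> T)
    (oracle : seq bool -> T -> bool -> option T)
    (oracle_correct : forall bs q, correct_answer e vs q (oracle bs q false))
    (oracle_error : forall bs q, valid_answer e q (oracle bs q true) /\
                                 oracle bs q true <> oracle bs q false)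
    (tau : nat) (htau : (1 <= tau)%N)
    (delta : R) (hd0 : 0 < delta) (hd1 : delta < 2^-1) :
  let Gamma := (1 - p) / p in
  \sum_(bs : tau.-tuple bool |
          weights_after e p strat oracle bs vs >=
          (#|T|%:R)^-1
          * Gamma `^ (- Num.sqrt (tau%:R / 2 * ln (delta^-1)))
          * 2 `^ (- (Hbin p * tau%:R)))
     bits_prob p bs
  >= 1 - delta.
Proof.
cbv zeta; set Gamma := (1 - p) / p.
have p1 : p < 1 by apply: lt_trans hp1 _; rewrite invf_lt1 // ltr1n.
have hp2 : p * 2 < 1 by rewrite -ltr_pdivlMr ?div1r.
have pp : p < 1 - p by lra.
have p1p : 0 < 1 - p by lra.
have nT : (0 : R) < #|T|%:R by rewrite ltr0n; apply/card_gt0P; exists vs.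
set c := (#|T|%:R)^-1.
have c0 : 0 < c by rewrite invr_gt0.
set L := ln delta^-1.
have L0 : 0 < L by rewrite /L ln_gt0 // invf_gt1 //; lra.
set t : R := tau%:R.
have t0 : 0 < t by rewrite /t ltr0n.
set s := Num.sqrt (t / 2 * L).
have s0 : 0 <= s by exact: sqrtr_ge0.
have s2 : s ^+ 2 = t / 2 * L by rewrite sqr_sqrtr // mulr_ge0 // ?divr_ge0 // ltW.
set A := ln (1 - p). set B := ln p.
have AB : B < A by rewrite /A /B ltr_ln // posrE.
have G0 : 0 < Gamma by rewrite /Gamma divr_gt0.
have lnG : ln Gamma = A - B.
  by rewrite /Gamma lnM ?posrE ?invr_gt0 // lnV ?posrE.
have HL : Hbin p * ln 2 = - (p * B) - (1 - p) * A.
  have l2 : ln (2 : R) != 0 by rewrite gt_eqF // ln_gt0 // ltr1n.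
  by rewrite /Hbin /log2 -/A -/B; field.
set good := fun bs : tau.-tuple bool => (count id bs)%:R <= p * t + s.
have ek (a : R) (n : nat) : 0 < a -> a ^+ n = expR (n%:R * ln a).
  by move=> a0; rewrite expRM_natl lnK.
have stepA (bs : tau.-tuple bool) : good bs ->
    c * Gamma `^ (- s) * 2 `^ (- (Hbin p * t)) <=
    weights_after e p strat oracle bs vs.
  move=> gb.
  have W := @weights_ge R T e p vs hp0 hp1 strat oracle oracle_correct
     ([::], [::], fun _ => c) bs (ltW c0).
  apply: le_trans W.
  rewrite -mulrA; apply: ler_wpM2l; first exact: ltW.
  rewrite /bits_prob prod_count.
  have cn : (count negb bs + count id bs)%N = tau.
    by have := count_predC id bs; rewrite size_tuple addnC; apply.
  have cnR : (count negb bs)%:R = t - (count id bs)%:R :> R.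
    by rewrite /t; apply/eqP; rewrite eq_sym subr_eq -natrD cn.
  rewrite (ek p) // (ek (1-p)) // -expRD /powR (gt_eqF G0).
  rewrite (_ : ((2:R) == 0) = false); last by rewrite pnatr_eq0.
  rewrite -expRD ler_expR lnG cnR.
  have E2 : -(Hbin p * t) * ln 2 = t * (p * B + (1 - p) * A).
    by rewrite mulNr mulrAC HL; ring.
  rewrite E2 -/A -/B.
  have hAB : 0 <= A - B by lra.
  have hk : 0 <= p * t + s - (count id bs)%:R by move: gb; rewrite /good; lra.
  have := mulr_ge0 hAB hk.
  nra.
have tot : \sum_(bs : tau.-tuple bool) bits_prob p bs = 1.
  rewrite /bits_prob (@sum_tuple_prod _ tau (fun b => if b then p else 1 - p)) /=.
  by rewrite addrC subrK expr1n.
set lam := 4 * s / t.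
have lam0 : 0 <= lam by rewrite /lam divr_ge0 ?mulr_ge0 // ltW.
have e1 (bs : tau.-tuple bool) :
    bits_prob p bs * expR (lam * ((count id bs)%:R - (p * t + s))) =
    expR (- (lam * (p * t + s))) * \prod_(b <- bs) (if b then p * expR lam else 1 - p).
  rewrite /bits_prob !prod_count mulrBr expRD [lam * (count _ _)%:R]mulrC expRM_natl exprMn.
  ring.
have tail : \sum_(bs : tau.-tuple bool | ~~ good bs) bits_prob p bs <= delta.
  apply: le_trans (_ : \sum_(bs : tau.-tuple bool)
      bits_prob p bs * expR (lam * ((count id bs)%:R - (p * t + s))) <= _).
    rewrite big_mkcond; apply: ler_sum => bs _; case: ifP => gb.
      rewrite -[X in X <= _]mulr1; apply: ler_wpM2l; first exact: bits_prob_ge0.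
      rewrite -{1}expR0 ler_expR mulr_ge0 // subr_ge0 ltW //.
      by move: gb; rewrite /good -ltNge.
    by rewrite mulr_ge0 ?expR_ge0 ?bits_prob_ge0.
  rewrite (eq_bigr _ (fun bs _ => e1 bs)) -big_distrr /= sum_tuple_prod.
  have hN := @hoeffding R p hp0 p1 lam lam0; rewrite /N in hN.
  apply: le_trans (_ : expR (- (lam * (p * t + s))) * expR (lam * p + lam ^+ 2 / 8) ^+ tau <= _).
    apply: ler_wpM2l; first exact: expR_ge0.
    apply: lerXn2r; rewrite ?nnegrE ?expR_ge0 //.
      by rewrite addr_ge0 ?mulr_ge0 ?expR_ge0 ?ltW.
    by rewrite addrC.
  rewrite -expRM_natl -expRD -/t.
  have -> : - (lam * (p * t + s)) + t * (lam * p + lam ^+ 2 / 8) = - L.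
    have -> : - (lam * (p * t + s)) + t * (lam * p + lam ^+ 2 / 8) = - 2 * s ^+ 2 / t.
      by rewrite /lam; field; rewrite gt_eqF.
    by rewrite s2; field; rewrite gt_eqF.
  by rewrite expRN /L lnK ?invrK // posrE invr_gt0.
rewrite (bigID good) /= in tot.
apply: le_trans (_ : \sum_(bs | good bs) bits_prob p bs <= _).
  lra.
rewrite big_mkcond [X in _ <= X]big_mkcond; apply: ler_sum => bs _; case: ifP => gb.
  by rewrite (stepA bs gb).
by case: ifP => _; rewrite ?bits_prob_ge0.
Qed.
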